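(* For every DBI normal formula $\varphi$, the pointed action model $(\mathcal{U}_\varphi,0)$ is idempotent: for every pointed Kripke model $(\mathcal{M},w)$, the pointed updates $\bigl(\mathcal{M}\odot\mathcal{U}_\varphi,(w,0)\bigr)$ and $\bigl((\mathcal{M}\odot\mathcal{U}_\varphi)\odot\mathcal{U}_\varphi,((w,0),0)\bigr)$ are both defined and are isomorphic as pointed Kripke models.
   Context: Agents $\mathcal{A}=\{1,\dots,n\}$, $n>1$; language $\mathcal{L}$: $\varphi ::= p \mid \neg\varphi \mid (\varphi\wedge\varphi)\mid B_i\varphi$, $\top$ the usual tautology. Kripke model $\mathcal{M}=\langle S,R,V\rangle$ (nonempty $S$, $R_i\subseteq S\times S$, $V:\mathit{Prop}\to 2^S$), standard truth. Action model $\mathcal{U}=\langle E,Q,\mathsf{pre}\rangle$ (nonempty $E$, $Q_i\subseteq E\times E$, $\mathsf{pre}:E\to\mathcal{L}$). Pointed update of $(\mathcal{M},w)$ with $(\mathcal{U},\alpha)$, defined iff $\mathcal{M},w\vDash\mathsf{pre}(\alpha)$: with $T=\{(x,\beta)\in S\times E\mid\mathcal{M},x\vDash\mathsf{pre}(\beta)\}$, $\mathcal{M}\odot\mathcal{U}=\langle S^{\mathcal U},R^{\mathcal U},V^{\mathcal U}\rangle$ where $S^{\mathcal U}$ is the smallest subset of $T$ containing $(w,\alpha)$ closed under: $(x,\beta)\in S^{\mathcal U}$, $(u,\gamma)\in T$, $xR_iu$, $\beta Q_i\gamma$ imply $(u,\gamma)\in S^{\mathcal U}$; $R^{\mathcal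 U}_i$ relates $(x,\beta),(u,\gamma)\in S^{\mathcal U}$ iff $xR_iu$ and $\beta Q_i\gamma$; $V^{\mathcal U}(p)=\{(x,\beta)\in S^{\mathcal U}\mid x\in V(p)\}$; the result is the pointed model $(\mathcal{M}\odot\mathcal{U},(w,\alpha))$. Two pointed Kripke models are isomorphic if there is a bijection of worlds preserving the relations, the valuation and the point. Target agents: $\mathsf{ta}(p)=\varnothing$, $\mathsf{ta}(\neg\phi)=\mathsf{ta}(\phi)$, $\mathsf{ta}(\phi\wedge\psi)=\mathsf{ta}(\phi)\cup\mathsf{ta}(\psi)$, $\mathsf{ta}(B_i\phi)=\{i\}$. DBI formulas: $\varphi ::= B_i\xi \mid B_i(\xi\wedge\varphi)\mid(\varphi\wedge\varphi)\mid B_i\varphi$, $\xi$ purely propositional. DBI normal: $B_i\xi$ always; $B_i\varphi$, $B_i(\xi\wedge\varphi)$ iff $\varphi$ DBI normal and $i\notin\mathsf{ta}(\varphi)$; $\varphi\wedge\psi$ iff both DBI normal and $\mathsf{ta}(\varphi)\cap\mathsf{ta}(\psi)=\varnothing$. Action model $\mathcal{U}_\varphi=\langle E^\varphi,Q^\varphi,\mathsf{pre}^\varphi\rangle$ for DBI normal $\varphi$, recursively; always $E^\varphi=\{0,-1\}\sqcup D^\varphi$, $\varnothing\ne D^\varphi\subseteq\{1,2,\dots\}$, $\mathsf{pre}^\varphi(0)=\mathsf{pre}^\varphi(-1)=\top$; $\underline{Q}_j:=Q_j\cap((E\setminus\{0\})\times(E\setminus\{0\}))$. (1) $\varphi=B_i\xi$: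 $D=\{m\}$, $\mathsf{pre}(m)=\xi$, $Q_j=\{(0,-1),(m,-1),(-1,-1)\}$ ($j\ne i$), $Q_i=\{(0,m),(m,m),(-1,-1)\}$. (2) $\varphi=B_i\psi$: fresh $m\ge1$, $m\notin D^\psi$; $D^\varphi=D^\psi\sqcup\{m\}$; $\mathsf{pre}^\varphi$ extends $\mathsf{pre}^\psi$ with $\mathsf{pre}^\varphi(m)=\top$; $Q^\varphi_j=\underline{Q}^\psi_j\cup\{(0,-1)\}\cup\{(m,k)\mid(0,k)\in Q^\psi_j\}$ ($j\ne i$); $Q^\varphi_i=\underline{Q}^\psi_i\cup\{(0,m),(m,m)\}$. (3) $\varphi=B_i(\xi\wedge\psi)$: as (2) but $\mathsf{pre}^\varphi(m)=\xi$. (4) $\varphi=\psi\wedge\theta$: with $D^\psi\cap D^\theta=\varnothing$, $D^\varphi=D^\psi\sqcup D^\theta$, $\mathsf{pre}^\varphi=\mathsf{pre}^\psi\cup\mathsf{pre}^\theta$, $Q^\varphi_j=\underline{Q}^\psi_j\cup\underline{Q}^\theta_j\cup\{(0,k)\mid(0,k)\in Q^\psi_j\cup Q^\theta_j, k\in D^\psi\sqcup D^\theta\}\cup\{(0,-1)\mid\text{no such }k\text{ exists}\}$. *)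

(* Defs.v *)
From mathcomp Require Import all_boot all_order all_algebra.
Unset Printing Implicit Defensive.
Import GRing.Theory Num.Theory.

(* Agents are 'I_n (i.e. {0,...,n-1}, playing the role of {1,...,n});
   atomic propositions range over an arbitrary type P. *)
Inductive eform (n : nat) (P : Type) : Type :=
| Var of P
| Neg of eform n P
| And of eform n P & eform n P
| Bel of 'I_n & eform n P.
Arguments Var {n P}. Arguments Neg {n P}. Arguments And {n P}. Arguments Bel {n P}.

Definition Top {n : nat} {P : Type} (p0 : P) : eform n P :=
  Neg (And (Var p0) (Neg (Var p0))).

Fixpoint is_prop {n : nat} {P : Type} (f : eform n P) : bool :=
  match f with
  | Var _ => true
  | Neg g => is_prop g
  | And g h => is_prop g && is_prop h
  | Bel _ _ => false
  end.

Fixpoint ta {n : nat} {P : Type} (f : eform n P) : {set 'I_n} :=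
  match f with
  | Var _ => set0
  | Neg g => ta g
  | And g h => ta g :|: ta h
  | Bel i _ => [set i]
  end.

Inductive is_DBI {n : nat} {P : Type} : eform n P -> Prop :=
| DBI_B i xi : is_prop xi -> is_DBI (Bel i xi)
| DBI_BA i xi f : is_prop xi -> is_DBI f -> is_DBI (Bel i (And xi f))
| DBI_A f g : is_DBI f -> is_DBI g -> is_DBI (And f g)
| DBI_BB i f : is_DBI f -> is_DBI (Bel i f).

Inductive DBI_normal {n : nat} {P : Type} : eform n P -> Prop :=
| N_B i xi : is_prop xi -> DBI_normal (Bel i xi)
| N_BB i f : DBI_normal f -> i \notin ta f -> DBI_normal (Bel i f)
| N_BA i xi f : is_prop xi -> DBI_normal f -> i \notin ta f ->
    DBI_normal (Bel i (And xi f))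
| N_A f g : DBI_normal f -> DBI_normal g -> [disjoint ta f & ta g] ->
    DBI_normal (And f g).

Record KM (n : nat) (P : Type) := {
  st : Type;
  krel : 'I_n -> st -> st -> Prop;
  kval : P -> st -> Prop }.
Arguments st {n P}. Arguments krel {n P}. Arguments kval {n P}.

Fixpoint sat {n : nat} {P : Type} (M : KM n P) (x : st M) (f : eform n P) : Prop :=
  match f with
  | Var p => kval M p x
  | Neg g => ~ sat M x g
  | And g h => sat M x g /\ sat M x h
  | Bel i g => forall y, krel M i x y -> sat M y g
  end.
Arguments sat {n P} M x f.

Record PKM (n : nat) (P : Type) := { pm : KM n P; ppt : st pm }.
Arguments pm {n P}. Arguments ppt {n P}.

Record AM (n : nat) (P : Type) := {
  ev : Type;
  arel : 'I_n -> ev -> ev -> Prop;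
  pre : ev -> eform n P }.
Arguments ev {n P}. Arguments arel {n P}. Arguments pre {n P}.

Inductive inU {n : nat} {P : Type} (M : KM n P) (U : AM n P) (w : st M) (a : ev U)
  : st M * ev U -> Prop :=
| inU_base : inU M U w a (w, a)
| inU_step x b u c i :
    inU M U w a (x, b) -> sat M u (pre U c) -> krel M i x u -> arel U i b c ->
    inU M U w a (u, c).

Definition upd_model {n : nat} {P : Type} (M : KM n P) (U : AM n P) (w : st M) (a : ev U)
  : KM n P :=
  {| st := {p : st M * ev U | inU M U w a p};
     krel := fun i p q => krel M i (proj1_sig p).1 (proj1_sig q).1 /\
                          arel U i (proj1_sig p).2 (proj1_sig q).2;
     kval := fun x p => kval M x (proj1_sig p).1 |}.

(* the pointed update (M ⊙ U, (w, a)); it is *defined* iff update_defined holds *)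
Definition update_defined {n : nat} {P : Type} (Mw : PKM n P) (U : AM n P) (a : ev U) : Prop :=
  sat (pm Mw) (ppt Mw) (pre U a).

Definition pupdate {n : nat} {P : Type} (Mw : PKM n P) (U : AM n P) (a : ev U) : PKM n P :=
  {| pm := upd_model (pm Mw) U (ppt Mw) a;
     ppt := exist _ (ppt Mw, a) (inU_base (pm Mw) U (ppt Mw) a) : st (upd_model (pm Mw) U (ppt Mw) a) |}.

Definition pk_iso {n : nat} {P : Type} (A B : PKM n P) : Prop :=
  exists f : st (pm A) -> st (pm B),
    bijective f /\
    (forall i x y, krel (pm A) i x y <-> krel (pm B) i (f x) (f y)) /\
    (forall p x, kval (pm A) p x <-> kval (pm B) p (f x)) /\
    f (ppt A) = ppt B.

Local Open Scope ring_scope.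

(* Events are integers: E = {0,-1} ⊔ D with D a
   finite list of positive integers; Q j is a boolean relation on int and
   pre a function int -> eform (only its values on E matter).  UAM p0 phi D Q pre
   holds iff (E, Q, pre) is obtained from phi by the recursive construction
   (1)-(4), for some admissible choice of the fresh positive labels. *)
Inductive UAM {n : nat} {P : Type} (p0 : P)
  : eform n P -> seq int -> ('I_n -> rel int) -> (int -> eform n P) -> Prop :=
| UAM1 i xi (m : int) : is_prop xi -> 0 < m ->
    UAM p0 (Bel i xi) [:: m]
      (fun j e f => if j == i then
                      [|| (e == 0) && (f == m), (e == m) && (f == m)
                        | (e == -1) && (f == -1)]
                    else
                      [|| (e == 0) && (f == -1), (e == m) && (f == -1)
                        | (e == -1) && (f == -1)])
      (fun e => if e == m then xi else Top p0)
| UAM2 i psi D Q pr (m : int) : UAM p0 psi D Q pr -> 0 < m -> m \notin D ->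
    UAM p0 (Bel i psi) (m :: D)
      (fun j e f =>
         let uQ := [&& Q j e f, e != 0 & f != 0] in
         if j == i then [|| uQ, (e == 0) && (f == m) | (e == m) && (f == m)]
         else [|| uQ, (e == 0) && (f == -1) | (e == m) && Q j 0 f])
      (fun e => if e == m then Top p0 else pr e)
| UAM3 i xi psi D Q pr (m : int) : is_prop xi -> UAM p0 psi D Q pr -> 0 < m -> m \notin D ->
    UAM p0 (Bel i (And xi psi)) (m :: D)
      (fun j e f =>
         let uQ := [&& Q j e f, e != 0 & f != 0] in
         if j == i then [|| uQ, (e == 0) && (f == m) | (e == m) && (f == m)]
         else [|| uQ, (e == 0) && (f == -1) | (e == m) && Q j 0 f])
      (fun e => if e == m then xi else pr e)
| UAM4 psi th D1 Q1 pr1 D2 Q2 pr2 :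
    UAM p0 psi D1 Q1 pr1 -> UAM p0 th D2 Q2 pr2 -> all (fun k => k \notin D2) D1 ->
    UAM p0 (And psi th) (D1 ++ D2)
      (fun j e f =>
         [|| [&& Q1 j e f, e != 0 & f != 0],
             [&& Q2 j e f, e != 0 & f != 0],
             [&& e == 0, f \in D1 ++ D2 & (Q1 j 0 f || Q2 j 0 f)]
           | [&& e == 0, f == -1 & ~~ has (fun k => Q1 j 0 k || Q2 j 0 k) (D1 ++ D2)]])
      (fun e => if e \in D1 then pr1 e else pr2 e).

Definition am_of {n : nat} {P : Type} (D : seq int) (Q : 'I_n -> rel int)
  (pr : int -> eform n P) : AM n P :=
  {| ev := {e : int | e \in [:: 0, -1 & D]};
     arel := fun i a b => Q i (proj1_sig a) (proj1_sig b);
     pre := fun a => pr (proj1_sig a) |}.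

Definition ev0 {n : nat} {P : Type} (D : seq int) (Q : 'I_n -> rel int)
  (pr : int -> eform n P) : ev (am_of D Q pr) :=
  exist (fun e : int => e \in [:: 0, -1 & D]) 0 (mem_head _ _).

(* Main.v *)
Require Import Defs.
From mathcomp Require Import all_boot all_order all_algebra zify.
Import Order.TTheory GRing.Theory Num.Theory.
From Stdlib Require Import ProofIrrelevance.

Lemma sat_prop_upd {n : nat} {P : Type} (M : KM n P) (U : AM n P) w a
  (x : st (upd_model M U w a)) (f : eform n P) :
  is_prop f -> (sat (upd_model M U w a) x f <-> sat M (proj1_sig x).1 f).
Proof.
elim: f => [p|g IH|g IHg h IHh|i g IH] //= Hp.
- by move: (IH Hp) => [H1 H2]; split=> H3 H4; apply: H3; auto.
- case/andP: Hp => Hg Hh; move: (IHg Hg) (IHh Hh) => [? ?] [? ?]; split; case; auto.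
Qed.

Section Gen.
Variables (n : nat) (P : Type) (Mw : PKM n P) (U : AM n P) (a : ev U).
Hypothesis Uprop : forall e, is_prop (pre U e).
Hypothesis Ufun : forall i e f g, arel U i e f -> arel U i e g -> f = g.

Let M := pm Mw.
Let w := ppt Mw.
Let MU := upd_model M U w a.
Let pt : st MU := exist _ (w, a) (inU_base M U w a).

Lemma inU_diag p : inU M U w a p -> forall Hp, inU MU U pt a (exist _ p Hp, p.2).
Proof.
elim=> [|x b u c i H IH Hs Hk Ha] Hp.
  by rewrite (proof_irrelevance _ Hp (inU_base M U w a)); apply: inU_base.
apply: (@inU_step _ _ MU U pt a (exist _ (x, b) H) b (exist _ (u, c) Hp) c i).
- exact: IH.
- by apply/sat_prop_upd.
- by split.
- exact: Ha.
Qed.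

Lemma inU_inv q : inU MU U pt a q -> (proj1_sig q.1).2 = q.2.
Proof.
elim=> [|x b u c i H IH Hs [Hk Ha] Ha'] //=.
rewrite IH in Ha; exact: Ufun Ha Ha'.
Qed.

Lemma diag_of (x : st MU) : inU MU U pt a (x, (proj1_sig x).2).
Proof. case: x => p Hp; exact: inU_diag. Qed.

Definition fdiag (x : st MU) : st (upd_model MU U pt a) :=
  exist _ (x, (proj1_sig x).2) (diag_of x).

Lemma gen_iso : pk_iso (pupdate Mw U a) (pupdate (pupdate Mw U a) U a).
Proof.
exists fdiag; split; [|split; [|split]].
- exists (fun y => (proj1_sig y).1).
    by case.
  case=> [[q d] Hy] /=.
  have E := inU_inv _ Hy; simpl in E; subst d.
  rewrite /fdiag; f_equal; apply: proof_irrelevance.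
- move=> i x y /=; split; [move=> H; split=> //; exact: H.2 | by case].
- by move=> p x /=.
- rewrite /fdiag /=; f_equal; apply: proof_irrelevance.
Qed.
End Gen.

Section U.
Variables (n : nat) (P : Type) (p0 : P).
Local Open Scope ring_scope.

Lemma UAM_pos phi D Q pr : @UAM n P p0 phi D Q pr -> forall k, k \in D -> 0 < k.
Proof.
elim=> {phi D Q pr}.
- by move=> i xi m _ Hm k; rewrite inE => /eqP ->.
- by move=> i psi D Q pr m _ IH Hm _ k; rewrite inE => /orP [/eqP ->|/IH].
- by move=> i xi psi D Q pr m _ _ IH Hm _ k; rewrite inE => /orP [/eqP ->|/IH].
- by move=> psi th D1 Q1 pr1 D2 Q2 pr2 _ IH1 _ IH2 _ k; rewrite mem_cat => /orP [/IH1|/IH2].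
Qed.

Lemma UAM_pr0 phi D Q pr : @UAM n P p0 phi D Q pr -> pr 0 = Top p0.
Proof.
elim=> {phi D Q pr}.
- by move=> i xi m _ Hm; rewrite (lt_eqF Hm).
- by move=> i psi D Q pr m _ IH Hm _; rewrite (lt_eqF Hm).
- by move=> i xi psi D Q pr m _ _ IH Hm _; rewrite (lt_eqF Hm).
- move=> psi th D1 Q1 pr1 D2 Q2 pr2 H1 IH1 _ IH2 _.
  case: ifP => // /(UAM_pos H1); by rewrite ltxx.
Qed.

Lemma UAM_prop phi D Q pr : @UAM n P p0 phi D Q pr -> forall e, is_prop (pr e).
Proof.
elim=> {phi D Q pr}.
- by move=> i xi m Hx Hm e; case: ifP.
- by move=> i psi D Q pr m _ IH Hm _ e; case: ifP.
- by move=> i xi psi D Q pr m Hx _ IH Hm _ e; case: ifP.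
- by move=> psi th D1 Q1 pr1 D2 Q2 pr2 H1 IH1 _ IH2 _ e; case: ifP.
Qed.

Lemma UAM_dom phi D Q pr : @UAM n P p0 phi D Q pr ->
  forall j e f, Q j e f -> e \in [:: 0, -1 & D].
Proof.
elim=> {phi D Q pr}.
- move=> i xi m _ Hm j e f /=; rewrite !inE.
  by case: (j == i) => /or3P [/andP[->]|/andP[->]|/andP[->]]; rewrite ?orbT.
- move=> i psi D Q pr m _ IH Hm _ j e f /=.
  have H : forall e, e \in [:: 0, -1 & D] -> e \in [:: 0, -1, m & D].
    by move=> x; rewrite !inE => /or3P [->|->|->]; rewrite ?orbT.
  case: (j == i) => /or3P [/and3P[/IH/H]|/andP[/eqP ->]|/andP[/eqP ->]] //;
    by rewrite !inE eqxx ?orbT.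
- move=> i xi psi D Q pr m _ _ IH Hm _ j e f /=.
  have H : forall e, e \in [:: 0, -1 & D] -> e \in [:: 0, -1, m & D].
    by move=> x; rewrite !inE => /or3P [->|->|->]; rewrite ?orbT.
  case: (j == i) => /or3P [/and3P[/IH/H]|/andP[/eqP ->]|/andP[/eqP ->]] //;
    by rewrite !inE eqxx ?orbT.
- move=> psi th D1 Q1 pr1 D2 Q2 pr2 H1 IH1 H2 IH2 _ j e f /=.
  case/or4P => [/and3P[/IH1]|/and3P[/IH2]|/and3P[/eqP ->]|/and3P[/eqP ->]] //;
    rewrite !inE ?mem_cat; try (by case/or3P=> ->; rewrite ?orbT).
Qed.

Lemma UAM_m1 phi D Q pr : @UAM n P p0 phi D Q pr ->
  forall j f, Q j (-1) f -> f = -1.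
Proof.
elim=> {phi D Q pr}.
- move=> i xi m _ Hm j f.
  case: (j == i) => /or3P [/andP[/eqP]|/andP[/eqP]|/andP[_ /eqP]] //; lia.
- move=> i psi D Q pr m _ IH Hm _ j f.
  case: (j == i) => /or3P [/and3P[/IH]|/andP[/eqP]|/andP[/eqP]] //; lia.
- move=> i xi psi D Q pr m _ _ IH Hm _ j f.
  case: (j == i) => /or3P [/and3P[/IH]|/andP[/eqP]|/andP[/eqP]] //; lia.
- move=> psi th D1 Q1 pr1 D2 Q2 pr2 H1 IH1 H2 IH2 _ j f.
  case/or4P => [/and3P[/IH1]|/and3P[/IH2]|/and3P[/eqP]|/and3P[/eqP]] //; lia.
Qed.

Lemma UAM_ta phi D Q pr : @UAM n P p0 phi D Q pr ->
  forall j f, Q j 0 f -> f != -1 -> j \in ta phi.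
Proof.
elim=> {phi D Q pr}.
- move=> i xi m _ Hm j f; rewrite in_set1.
  case: (j == i) => // /or3P [/andP[_ /eqP ->]|/andP[/eqP]|/andP[/eqP]] //; try lia.
- move=> i psi D Q pr m _ IH Hm _ j f; rewrite in_set1.
  case: (j == i) => // /or3P [/and3P[_ /eqP]|/andP[_ /eqP ->]|/andP[/eqP]] //; try lia.
- move=> i xi psi D Q pr m _ _ IH Hm _ j f; rewrite in_set1.
  case: (j == i) => // /or3P [/and3P[_ /eqP]|/andP[_ /eqP ->]|/andP[/eqP]] //; try lia.
- move=> psi th D1 Q1 pr1 D2 Q2 pr2 H1 IH1 H2 IH2 _ j f; rewrite in_setU.
  case/or4P => [/and3P[_ /eqP]|/and3P[_ /eqP]|/and3P[_ _ /orP[/IH1 H|/IH2 H]] Hf|/and3P[_ /eqP -> _]] //.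
  + by rewrite H.
  + by rewrite H ?orbT.
Qed.
End U.
Arguments UAM_pos {n P p0 phi D Q pr}.
Arguments UAM_pr0 {n P p0 phi D Q pr}.
Arguments UAM_prop {n P p0 phi D Q pr}.
Arguments UAM_dom {n P p0 phi D Q pr}.
Arguments UAM_m1 {n P p0 phi D Q pr}.
Arguments UAM_ta {n P p0 phi D Q pr}.

Section F.
Variables (n : nat) (P : Type) (p0 : P).
Local Open Scope ring_scope.

Fixpoint good (f : eform n P) : Prop :=
  match f with
  | Var _ => True
  | Neg g => good g
  | And g h => [/\ good g, good h & [disjoint ta g & ta h]]
  | Bel _ g => good g
  end.

Lemma UAM_notm phi D Q pr m : @UAM n P p0 phi D Q pr -> 0 < m -> m \notin D ->
  forall j f, Q j m f = false.
Proof.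
move=> H Hm HD j f; apply/negP => /(UAM_dom H); rewrite !inE (negbTE HD) orbF.
apply/negP; rewrite negb_or; apply/andP; split; apply/eqP; lia.
Qed.

Ltac fin IH Qm A1 A2 :=
  first [ lia
        | by apply: IH
        | (by rewrite Qm in A1)
        | (by rewrite Qm in A2) ].

Lemma UAM_fun phi D Q pr : @UAM n P p0 phi D Q pr -> good phi ->
  forall j e f1 f2, Q j e f1 -> Q j e f2 -> f1 = f2.
Proof.
elim=> {phi D Q pr}.
- move=> i xi m _ Hm _ j e f1 f2.
  case: (j == i) => /or3P [/andP[/eqP E1 /eqP F1]|/andP[/eqP E1 /eqP F1]|/andP[/eqP E1 /eqP F1]]
     /or3P [/andP[/eqP E2 /eqP F2]|/andP[/eqP E2 /eqP F2]|/andP[/eqP E2 /eqP F2]]; lia.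
- move=> i psi D Q pr m H IH Hm HD /= /IH {}IH j e f1 f2.
  have Qm := UAM_notm _ _ _ _ _ H Hm HD.
  case: (j == i).
  + case/or3P => [/and3P[A1 B1 C1]|/andP[/eqP E1 /eqP F1]|/andP[/eqP E1 /eqP F1]];
    case/or3P => [/and3P[A2 B2 C2]|/andP[/eqP E2 /eqP F2]|/andP[/eqP E2 /eqP F2]];
    try subst e; first [lia | by apply: IH A1 A2 | by rewrite Qm in A1 | by rewrite Qm in A2].
  + case/or3P => [/and3P[A1 B1 C1]|/andP[/eqP E1 /eqP F1]|/andP[/eqP E1 A1]];
    case/or3P => [/and3P[A2 B2 C2]|/andP[/eqP E2 /eqP F2]|/andP[/eqP E2 A2]];
    try subst e; first [lia | by apply: IH A1 A2 | by rewrite Qm in A1 | by rewrite Qm in A2].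
- move=> i xi psi D Q pr m _ H IH Hm HD /= [_ /IH {}IH _] j e f1 f2.
  have Qm := UAM_notm _ _ _ _ _ H Hm HD.
  case: (j == i).
  + case/or3P => [/and3P[A1 B1 C1]|/andP[/eqP E1 /eqP F1]|/andP[/eqP E1 /eqP F1]];
    case/or3P => [/and3P[A2 B2 C2]|/andP[/eqP E2 /eqP F2]|/andP[/eqP E2 /eqP F2]];
    try subst e; first [lia | by apply: IH A1 A2 | by rewrite Qm in A1 | by rewrite Qm in A2].
  + case/or3P => [/and3P[A1 B1 C1]|/andP[/eqP E1 /eqP F1]|/andP[/eqP E1 A1]];
    case/or3P => [/and3P[A2 B2 C2]|/andP[/eqP E2 /eqP F2]|/andP[/eqP E2 A2]];
    try subst e; first [lia | by apply: IH A1 A2 | by rewrite Qm in A1 | by rewrite Qm in A2].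
- move=> psi th D1 Q1 pr1 D2 Q2 pr2 H1 IH1 H2 IH2 Hall /= [/IH1 {}IH1 /IH2 {}IH2 Hdis] j e f1 f2.
  have pos := fun k (Hk : k \in D1 ++ D2) =>
    UAM_pos (@UAM4 _ _ p0 _ _ _ _ _ _ _ _ H1 H2 Hall) _ Hk.
  have cross : forall e f1 f2, e != 0 -> Q1 j e f1 -> Q2 j e f2 -> f1 = f2.
    move=> e' g1 g2 He' A1 A2.
    have [Em|Em] := eqVneq e' (-1).
      by subst e'; rewrite (UAM_m1 H1 _ _ A1) (UAM_m1 H2 _ _ A2).
    move: (UAM_dom H1 _ _ _ A1) (UAM_dom H2 _ _ _ A2); rewrite !inE (negbTE He') (negbTE Em) /=.
    move=> I1 I2; move/allP: Hall => /(_ _ I1); by rewrite I2.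
  have cross0 : forall g1 g2, Q1 j 0 g1 -> g1 != -1 -> Q2 j 0 g2 -> g2 != -1 -> False.
    move=> g1 g2 A1 N1 A2 N2.
    have T1 := UAM_ta H1 _ _ A1 N1; have T2 := UAM_ta H2 _ _ A2 N2.
    by rewrite (disjointFr Hdis T1) in T2.
  case/or4P => [/and3P[A1 B1 C1]|/and3P[A1 B1 C1]|/and3P[/eqP E1 M1 /orP[A1|A1]]|/and3P[/eqP E1 /eqP F1 N1]];
  case/or4P => [/and3P[A2 B2 C2]|/and3P[A2 B2 C2]|/and3P[/eqP E2 M2 /orP[A2|A2]]|/and3P[/eqP E2 /eqP F2 N2]];
  try subst e;
  first [ lia
        | by apply: IH1 A1 A2
        | by apply: IH2 A1 A2
        | by apply: cross B1 A1 A2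
        | by apply/esym; apply: cross B1 A2 A1
        | by exfalso; apply: (cross0 _ _ A1 _ A2); apply/eqP; move: (pos _ M1) (pos _ M2); lia
        | by exfalso; apply: (cross0 _ _ A2 _ A1); apply/eqP; move: (pos _ M1) (pos _ M2); lia
        | by move/hasP: N2; case; exists f1 => //; rewrite A1 ?orbT
        | by move/hasP: N1; case; exists f2 => //; rewrite A2 ?orbT
        | idtac ].
Qed.

Lemma prop_good f : is_prop f -> good f /\ ta f = set0.
Proof.
elim: f => [p|g IH|g IHg h IHh|i g IH] //= Hp.
case/andP: Hp => /IHg [G1 T1] /IHh [G2 T2]; rewrite T1 T2 setU0; split=> //.
by split=> //; by rewrite -setI_eq0 setI0.
Qed.

Lemma normal_good f : @DBI_normal n P f -> good f.
Proof.
elim=> {f} /=.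
- by move=> i xi /prop_good [].
- by [].
- move=> i xi f /prop_good [G T] _ Gf _; split=> //; rewrite T.
  by rewrite -setI_eq0 set0I.
- by [].
Qed.
End F.

Theorem theorem7 (n : nat) (P : Type) (p0 : P) (phi : eform n P)
  (D : seq int) (Q : 'I_n -> rel int) (pr : int -> eform n P) :
  1 < n -> is_DBI phi -> DBI_normal phi -> UAM p0 phi D Q pr ->
  forall Mw : PKM n P,
    update_defined Mw (am_of D Q pr) (ev0 D Q pr) /\
    update_defined (pupdate Mw (am_of D Q pr) (ev0 D Q pr)) (am_of D Q pr) (ev0 D Q pr) /\
    pk_iso (pupdate Mw (am_of D Q pr) (ev0 D Q pr))
           (pupdate (pupdate Mw (am_of D Q pr) (ev0 D Q pr)) (am_of D Q pr) (ev0 D Q pr)).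
Proof.
move=> _ _ Hn HU Mw.
have Hpr0 := UAM_pr0 HU.
have Uprop : forall e : ev (am_of D Q pr), is_prop (pre (am_of D Q pr) e).
  by move=> e; apply: (UAM_prop HU).
have Ufun : forall i (e f g : ev (am_of D Q pr)),
    arel (am_of D Q pr) i e f -> arel (am_of D Q pr) i e g -> f = g.
  move=> i [e He] [f Hf] [g Hg] /= A1 A2.
  have E := UAM_fun _ _ _ _ _ _ _ HU (normal_good _ _ _ Hn) _ _ _ _ A1 A2.
  subst g; f_equal; apply: proof_irrelevance.
split; [|split].
- by rewrite /update_defined /= Hpr0 /=; tauto.
- by rewrite /update_defined /= Hpr0 /=; tauto.
- exact: gen_iso Uprop Ufun.
Qed.
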